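(* Let $n\geq 2$ be an integer and $m=\lfloor n/2\rfloor$. Let $X=(X_{j,r})_{j,r\in\{1,\dots,n\}}$ be a random $n\times n$ matrix with independent real-valued entries, $Q_{j,r}$ the distribution of $X_{j,r}$, $\pi$ a uniformly distributed random permutation of $\{1,\dots,n\}$ independent of $X$, and $S_n=\sum_{j=1}^nX_{j,\pi(j)}$ with distribution $P^{S_n}$. For ordered pairs $(j,k),(r,s)$ of distinct elements of $\{1,\dots,n\}$ let $R(j,k,r,s)=\frac12(Q_{j,r}*Q_{k,s}+Q_{k,r}*Q_{j,s})$. Then for every permutation $\varphi$ of $\{1,\dots,n\}$, $$P^{S_n}=\frac{1}{n!}\sum_{r}\Big(\mathop{\ast}_{\ell=1}^m R\big(\varphi(2\ell-1),\varphi(2\ell),r(2\ell-1),r(2\ell)\big)\Big)*Q_{\varphi(n),r(n)}^{*(n-2m)},$$ where the sum runs over all permutations $r$ of $\{1,\dots,n\}$.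
   Context: $*$ denotes convolution of measures on $\mathbb{R}$; $Q^{*k}$ is the $k$-fold convolution power, with the $0$-fold power equal to the Dirac measure $\delta_0$. *)

(* Defs.v *)
From HB Require Import structures.
From mathcomp Require Import all_boot all_order all_algebra all_fingroup.
From mathcomp Require Import all_classical all_reals all_analysis.
Set Implicit Arguments. Unset Strict Implicit. Unset Printing Implicit Defensive.
Import Order.TTheory GRing.Theory Num.Theory.
Local Open Scope classical_set_scope.
Local Open Scope ring_scope.

Section Convolution.
Variable R : realType.
Local Open Scope ereal_scope.

Definition conv (mu nu : set R -> \bar R) : set R -> \bar R :=
  fun A => (mu \x nu) ((fun z : R * R => z.1 + z.2)%R @^-1` A).

Definition bigconv (s : seq (set R -> \bar R)) : set R -> \bar R :=
  foldr conv (@dirac _ R 0%R R) s.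

Definition convpow (Q : set R -> \bar R) (k : nat) : set R -> \bar R :=
  bigconv (nseq k Q).

Definition Rmix n (Q : 'I_n -> 'I_n -> set R -> \bar R) (j k r s : 'I_n)
  : set R -> \bar R :=
  fun A => (2%:R^-1)%:E * (conv (Q j r) (Q k s) A + conv (Q k r) (Q j s) A).

End Convolution.

Lemma pair_fst_lt n (i : 'I_(n./2)) : (i.*2 < n)%N.
Proof.
have := ltn_ord i => hi.
have : (i.*2.+2 <= (n./2).*2)%N by rewrite -doubleS leq_double.
move=> h; apply: leq_trans (ltnW h) _.
by rewrite -{2}(odd_double_half n) leq_addl.
Qed.

Lemma pair_snd_lt n (i : 'I_(n./2)) : (i.*2.+1 < n)%N.
Proof.
have := ltn_ord i => hi.
have : (i.*2.+2 <= (n./2).*2)%N by rewrite -doubleS leq_double.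
move=> h; apply: leq_trans h _.
by rewrite -{2}(odd_double_half n) leq_addl.
Qed.

(* 0-based: the pair (phi(2l-1), phi(2l)), l = 1..m, is (phi (2i), phi(2i+1)), i < m *)
Definition pfst n (i : 'I_(n./2)) : 'I_n := Ordinal (pair_fst_lt i).
Definition psnd n (i : 'I_(n./2)) : 'I_n := Ordinal (pair_snd_lt i).

Section Term.
Variable R : realType.
Local Open Scope ereal_scope.

Definition perm_term n (Q : 'I_n -> 'I_n -> set R -> \bar R)
  (phi r : {perm 'I_n}) : set R -> \bar R :=
  conv
    (bigconv [seq Rmix Q (phi (pfst i)) (phi (psnd i)) (r (pfst i)) (r (psnd i))
             | i <- enum 'I_(n./2)])
    (oapp (fun l : 'I_n => convpow (Q (phi l) (r l)) (n - (n./2).*2))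
          (@dirac _ R 0%R R) (insub n.-1)).
End Term.

(* Main.v *)
Require Import Defs.
From HB Require Import structures.
From mathcomp Require Import all_boot all_order all_algebra all_fingroup.
From mathcomp Require Import all_classical all_reals all_analysis.
From mathcomp Require Import measurable_realfun lra.
Import Order.TTheory GRing.Theory Num.Theory.
Import numFieldNormedType.Exports.
Local Open Scope classical_set_scope.
Local Open Scope ring_scope.
Set Implicit Arguments. Unset Strict Implicit. Unset Printing Implicit Defensive.
Section IntMeq.
Context d (T : measurableType d) (R : realType).
Local Open Scope ereal_scope.
Import HBNNSimple.

Lemma int_meq (m1 m2 : set T -> \bar R) (f : T -> \bar R) :
  (forall A, measurable A -> m1 A = m2 A) ->
  \int[m1]_x f x = \int[m2]_x f x.
Proof.
have H : forall (m1 m2 : set T -> \bar R) (f : T -> \bar R),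
  (forall A, measurable A -> m1 A = m2 A) ->
  [set sintegral m1 h | h in
    [set h : {nnsfun T >-> R} | (forall x, (h x)%:E <= f x)]] `<=`
  [set sintegral m2 h | h in
    [set h : {nnsfun T >-> R} | (forall x, (h x)%:E <= f x)]].
  move=> m1' m2' g m12 _ [h hfD <-] /=; exists h => //.
  rewrite /sintegral; apply: eq_fsbigr => r _.
  by rewrite m12.
move=> m12.
have HE : forall g : T -> \bar R,
  [set sintegral m1 h | h in [set h : {nnsfun T >-> R} | forall x, (h x)%:E <= g x]] =
  [set sintegral m2 h | h in [set h : {nnsfun T >-> R} | forall x, (h x)%:E <= g x]].
  move=> g; rewrite eqEsubset; split; apply: H => // A mA; by rewrite m12.
by rewrite /integral !HE.
Qed.
End IntMeq.
Definition halfnn (R : realType) : {nonneg R} := ((2:R)^-1)%:nng.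
Section ConvGen.
Variable R : realType.
Local Open Scope ereal_scope.
Implicit Types f g : set R -> \bar R.

Definition meq f g := forall C : set R, measurable C -> f C = g C.
Definition good f := exists p : probability R R, meq f p.
Definition mix f g : set R -> \bar R := fun A => (2%:R^-1)%:E * (f A + g A).

Lemma Rmix_mix n (Q : 'I_n -> 'I_n -> set R -> \bar R) j k r s :
  Rmix Q j k r s = mix (Defs.conv (Q j r) (Q k s)) (Defs.conv (Q k r) (Q j s)).
Proof. by []. Qed.

Definition addR (z : R * R) : R := (z.1 + z.2)%R.

Lemma meas_add : measurable_fun setT addR.
Proof. exact: measurable_realfun.measurable_funD measurable_fst measurable_snd. Qed.

HB.instance Definition _ := isMeasurableFun.Build _ _ _ _ addR meas_add.

Lemma meas_addpre C : measurable C -> measurable (addR @^-1` C).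
Proof. by move=> mC; rewrite -[_ @^-1` _]setTI; apply: meas_add. Qed.

Lemma meq_refl f : meq f f. Proof. by []. Qed.
Lemma meq_sym f g : meq f g -> meq g f. Proof. by move=> h C mC; rewrite h. Qed.
Lemma meq_trans f g h : meq f g -> meq g h -> meq f h.
Proof. by move=> h1 h2 C mC; rewrite h1 // h2. Qed.

Lemma conv_meq f1 g1 f2 g2 : meq f1 g1 -> meq f2 g2 -> meq (Defs.conv f1 f2) (Defs.conv g1 g2).
Proof.
move=> h1 h2 C mC; rewrite /Defs.conv /product_measure1 (int_meq _ h1).
congr (integral _ _ _); apply: funext => y /=; apply: h2; apply: measurable_xsection.
exact: meas_addpre.
Qed.

Lemma mix_meq f1 g1 f2 g2 : meq f1 g1 -> meq f2 g2 -> meq (mix f1 f2) (mix g1 g2).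
Proof. by move=> h1 h2 C mC; rewrite /mix h1 // h2. Qed.

Lemma good_meq f g : meq f g -> good g -> good f.
Proof. by move=> h [p hp]; exists p; apply: meq_trans hp. Qed.

Lemma good_conv f g : good f -> good g -> good (Defs.conv f g).
Proof.
move=> [p hp] [q hq]; exists (distribution (p \x q) addR).
by apply: meq_trans (conv_meq hp hq) _.
Qed.

Lemma good_dirac : good (@dirac _ R 0%R R).
Proof. by exists (@dirac _ R 0%R R). Qed.

Lemma good_prob (p : probability R R) : good p.
Proof. by exists p. Qed.


Section PMix.
Variables p q : probability R R.
Definition pmix := mscale (halfnn R) (measure_add p q).
HB.instance Definition _ := Measure.on pmix.
Lemma pmixE A : pmix A = (2%:R^-1)%:E * (p A + q A).
Proof.
transitivity (((halfnn R)%:num)%:E * measure_add p q A); first by [].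
by rewrite measure_addE.
Qed.
Let pmix_setT : pmix setT = 1.
Proof.
rewrite pmixE !probability_setT -EFinD -EFinM; congr (_%:E).
by rewrite -[(1 + 1)%R]/(2%:R) mulVf.
Qed.
HB.instance Definition _ := Measure_isProbability.Build _ _ _ pmix pmix_setT.
End PMix.

Lemma mix_pmix f g (p q : probability R R) : meq f p -> meq g q -> meq (mix f g) (pmix p q).
Proof. by move=> hp hq C mC; rewrite pmixE /mix hp // hq. Qed.

Lemma good_mix f g : good f -> good g -> good (mix f g).
Proof. by move=> [p hp] [q hq]; exists (pmix p q); apply: mix_pmix. Qed.

Lemma good_bound f C : good f -> measurable C -> 0 <= f C /\ f C <= 1.
Proof. by move=> [p hp] mC; rewrite hp //; split; [exact: measure_ge0|exact: probability_le1]. Qed.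

End ConvGen.
Arguments addR {R}.
Section Lin.
Variable R : realType.
Local Open Scope ereal_scope.
Implicit Types f g h : set R -> \bar R.

Lemma meas_xs (p : probability R R) C : measurable C ->
  measurable_fun setT (fun y => p (xsection (addR @^-1` C) y)).
Proof. by move=> mC; apply: (measurable_fun_xsection p); apply: meas_addpre. Qed.

Lemma convE f g C : Defs.conv f g C = \int[f]_y g (xsection (addR @^-1` C) y).
Proof. by []. Qed.

Lemma conv_mixr f g h : good f -> good g -> good h ->
  meq (Defs.conv f (mix g h)) (mix (Defs.conv f g) (Defs.conv f h)).
Proof.
move=> [p hp] [q hq] [r hr] C mC.
rewrite (conv_meq hp (mix_pmix hq hr)) // /mix (conv_meq hp hq) // (conv_meq hp hr) //.
rewrite !convE.
under eq_integral => y _ do rewrite pmixE.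
have mq := meas_xs q mC; have mr := meas_xs r mC.
have mqr : measurable_fun setT (fun y => q (xsection (addR @^-1` C) y) + r (xsection (addR @^-1` C) y)).
  exact: emeasurable_funD.
rewrite ge0_integralZl //; first by rewrite ge0_integralD.
all: try by move=> y _; rewrite adde_ge0.
all: try by rewrite lee_fin invr_ge0.
Qed.

Lemma conv_mixl f g h : good f -> good g -> good h ->
  meq (Defs.conv (mix f g) h) (mix (Defs.conv f h) (Defs.conv g h)).
Proof.
move=> [p hp] [q hq] [r hr] C mC.
rewrite (conv_meq (mix_pmix hp hq) hr) // /mix (conv_meq hp hr) // (conv_meq hq hr) //.
rewrite !convE.
transitivity (\int[mscale (halfnn R) (measure_add p q)]_y r (xsection (addR @^-1` C) y)); first by [].
rewrite ge0_integral_mscale //; last by apply: meas_xs.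
by rewrite ge0_integral_measure_add //; apply: meas_xs.
Qed.

End Lin.
Section LinList.
Variable R : realType.
Local Open Scope ereal_scope.
Implicit Types f g h : set R -> \bar R.

Lemma bigcons f (l : seq (set R -> \bar R)) : bigconv (f :: l) = Defs.conv f (bigconv l).
Proof. by []. Qed.

Lemma bigconv_map_meq (I : eqType) (s : seq I) (F G : I -> set R -> \bar R) :
  (forall i, i \in s -> meq (F i) (G i)) ->
  meq (bigconv (map F s)) (bigconv (map G s)).
Proof.
elim: s => [//|i s IH] H; rewrite !map_cons !bigcons; apply: conv_meq.
  by apply: H; rewrite inE eqxx.
by apply: IH => j js; apply: H; rewrite inE js orbT.
Qed.

Lemma good_bigconv (I : eqType) (s : seq I) (F : I -> set R -> \bar R) :
  (forall i, i \in s -> good (F i)) -> good (bigconv (map F s)).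
Proof.
elim: s => [|i s IH] H; first exact: good_dirac.
rewrite map_cons bigcons; apply: good_conv; first by apply: H; rewrite inE eqxx.
by apply: IH => j js; apply: H; rewrite inE js orbT.
Qed.

Lemma mix_meq_l f g h k : meq f g -> meq (mix f h) k -> meq (mix g h) k.
Proof. by move=> H1 H2 C mC; rewrite -H2 // /mix H1. Qed.

Lemma bigconv_lin (I : eqType) (s : seq I) (t : I) (F1 F2 F3 : I -> set R -> \bar R) :
  uniq s -> t \in s ->
  (forall i, good (F2 i)) -> (forall i, good (F3 i)) ->
  (forall i, i != t -> meq (F1 i) (F2 i) /\ meq (F1 i) (F3 i)) ->
  meq (F1 t) (mix (F2 t) (F3 t)) ->
  meq (bigconv (map F1 s)) (mix (bigconv (map F2 s)) (bigconv (map F3 s))).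
Proof.
move=> + + g2 g3 Ho Ht; elim: s => [//|i s IH] /andP[iNs us].
have notin12 : t \notin s -> meq (bigconv (map F1 s)) (bigconv (map F2 s)).
  move=> ts; apply: bigconv_map_meq => j js.
  have jt : j != t by apply: contraNneq ts => <-.
  exact: (Ho j jt).1.
have notin13 : t \notin s -> meq (bigconv (map F1 s)) (bigconv (map F3 s)).
  move=> ts; apply: bigconv_map_meq => j js.
  have jt : j != t by apply: contraNneq ts => <-.
  exact: (Ho j jt).2.
have gB2 : good (bigconv (map F2 s)) by apply: good_bigconv.
have gB3 : good (bigconv (map F3 s)) by apply: good_bigconv.
rewrite inE => /orP[/eqP ti|ts]; rewrite !map_cons !bigcons.
- subst t.
  have B12 := notin12 iNs; have B13 := notin13 iNs.
  apply: meq_trans (conv_meq Ht B12) _.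
  apply: meq_trans (conv_mixl (g2 i) (g3 i) gB2) _.
  apply: mix_meq; first exact: meq_refl.
  by apply: conv_meq; [exact: meq_refl|apply: meq_trans (meq_sym B12) B13].
- have it : i != t by apply: contraNneq iNs => ->.
  have [H12 H13] := Ho i it.
  have g1 : good (F1 i) by apply: good_meq H12 (g2 i).
  apply: meq_trans (conv_meq (meq_refl _) (IH us ts)) _.
  apply: meq_trans (conv_mixr g1 gB2 gB3) _.
  by apply: mix_meq; apply: conv_meq.
Qed.

End LinList.
Section PUsec.
Variable R : realType.
Context d (Omega : measurableType d) (P : probability Omega R).
Local Open Scope ereal_scope.
Variables (H : set Omega) (mH : measurable H) (W : Omega -> (R * R)%type)
  (mW : measurable_fun setT W).

Definition m0W (D : set (R * R)) := P (H `&` W @^-1` D).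

Let m0W0 : m0W set0 = 0. Proof. by rewrite /m0W preimage_set0 setI0 measure0. Qed.
Let m0W_ge0 D : 0 <= m0W D. Proof. exact: measure_ge0. Qed.
Let mpre D : measurable D -> measurable (H `&` W @^-1` D).
Proof. by move=> mD; apply: measurableI mH _; rewrite -[_ @^-1` _]setTI; exact: mW. Qed.
Let m0W_sigma_additive : semi_sigma_additive m0W.
Proof.
move=> F mF tF mUF; rewrite /m0W preimage_bigcup setI_bigcupr.
apply: measure_semi_sigma_additive.
- by move=> i; apply: mpre.
- apply/trivIsetP => i j _ _ ij; rewrite setIACA setIid -preimage_setI.
  by move/trivIsetP : tF => /(_ i j Logic.I Logic.I ij) ->; rewrite preimage_set0 setI0.
- by rewrite -setI_bigcupr -preimage_bigcup; apply: mpre.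
Qed.
HB.instance Definition _ := isMeasure.Build _ _ _ m0W m0W0 m0W_ge0 m0W_sigma_additive.

Lemma PU_aux (c : R) (c0 : (0 < c)%R) (p1 p2 : probability R R) :
  (forall E1 E2, measurable E1 -> measurable E2 ->
     m0W (E1 `*` E2) = c%:E * p1 E1 * p2 E2) ->
  forall D, measurable D -> m0W D = c%:E * (p1 \x p2) D.
Proof.
move=> hrect D mD.
have k0 : (0 <= c^-1)%R by rewrite invr_ge0 ltW.
pose m' := mscale (NngNum k0) m0W.
have := @product_measure_unique _ _ R R R p1 p2 m'.
move=> /(_ _ D mD) ->.
-
  by rewrite muleA -EFinM mulfV ?gt_eqF // mul1e.
- move=> E1 E2 mE1 mE2.
  transitivity ((c^-1)%:E * m0W (E1 `*` E2)); first by [].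
  by rewrite hrect // !muleA -EFinM mulVf ?gt_eqF // mul1e.
Qed.
End PUsec.
Lemma bigI_mem (T : Type) (I : eqType) (s : seq I) (F : I -> set T) w :
  (\big[setI/setT]_(i <- s) F i) w <-> (forall i, i \in s -> F i w).
Proof.
elim: s => [|i s IH]; first by rewrite big_nil; split.
rewrite big_cons; split.
- move=> [Fi Hs] j; rewrite inE => /orP[/eqP->//|js]; exact: (IH.1 Hs j js).
- move=> H; split; first by apply: H; rewrite inE eqxx.
  by apply/IH => j js; apply: H; rewrite inE js orbT.
Qed.

Lemma bigI_ord (T : Type) m (F : 'I_m -> set T) w :
  (\big[setI/setT]_(j < m) F j) w <-> (forall j, F j w).
Proof.
have -> : (\big[setI/setT]_(j < m) F j) = \big[setI/setT]_(j <- index_enum 'I_m) F j by [].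
rewrite bigI_mem; split => H j //; apply: H; exact: mem_index_enum.
Qed.

Lemma mpreT d (T : measurableType d) d' (U : measurableType d') (f : T -> U) C :
  measurable_fun setT f -> measurable C -> measurable (f @^-1` C).
Proof. by move=> mf mC; rewrite -[_ @^-1` _]setTI; exact: mf. Qed.

Section Prob.
Variables (R : realType) (n : nat) (d : measure_display) (Omega : measurableType d)
  (P : probability Omega R) (X : 'I_n -> 'I_n -> {RV P >-> R})
  (pi : Omega -> {perm 'I_n})
  (pi_meas : forall s : {perm 'I_n}, measurable [set w | pi w = s]).
Local Open Scope ereal_scope.

Definition idx := ('I_n * 'I_n)%type.
Definition Qd (i : idx) := distribution P (X i.1 i.2).
Definition Sb (b : seq idx) (w : Omega) : R := (\sum_(i <- b) X i.1 i.2 w)%R.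

Lemma mX j r : measurable_fun setT (X j r).
Proof. exact: measurable_funPT. Qed.

Lemma mSb b : measurable_fun setT (Sb b).
Proof.
elim: b => [|i b IH].
  have -> : Sb [::] = cst 0%R by apply/funext => w; rewrite /Sb big_nil.
  exact: measurable_cst.
have -> : Sb (i :: b) = (X i.1 i.2 \+ Sb b)%R by apply/funext => w; rewrite /Sb big_cons.
exact: measurable_funD.
Qed.

Definition Gset (A' : {set {perm 'I_n}}) (B : 'I_n -> 'I_n -> set R) : set Omega :=
  [set w | pi w \in A'] `&`
  \big[setI/setT]_(j < n) \big[setI/setT]_(r < n) (X j r @^-1` B j r).

Lemma mpiA (A' : {set {perm 'I_n}}) : measurable [set w | pi w \in A'].
Proof.
have -> : [set w | pi w \in A'] = \big[setU/set0]_(s in A') [set w | pi w = s].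
  apply/seteqP; split => w /=.
  - move=> wA; rewrite (big_setD1 (pi w)) //=; by left.
  - elim/big_rec: _ => // s U sA IH [->//|]; exact: IH.
apply: big_ind; [exact: measurable0| by move=> ? ? ? ?; exact: measurableU| by move=> s _; exact: pi_meas].
Qed.

Lemma mGset A' B : (forall j r, measurable (B j r)) -> measurable (Gset A' B).
Proof.
move=> mB; apply: measurableI; first exact: mpiA.
apply: big_ind; [exact: measurableT| by move=> ? ? ? ?; exact: measurableI|].
move=> j _; apply: big_ind; [exact: measurableT| by move=> ? ? ? ?; exact: measurableI|].
by move=> r _; apply: mpreT => //; exact: mX.
Qed.

Variable indep : forall (A : {set {perm 'I_n}}) (B : 'I_n -> 'I_n -> set R),
      (forall j r, measurable (B j r)) ->
      P ([set w | pi w \in A] `&`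
         \big[setI/setT]_(j < n) \big[setI/setT]_(r < n) (X j r @^-1` B j r))
      = (P [set w | pi w \in A] *
         \prod_(j < n) \prod_(r < n) P (X j r @^-1` B j r))%E.

Definition upd (B : 'I_n -> 'I_n -> set R) (x : idx) (E : set R) :=
  fun j r => if (j, r) == x then E else B j r.

Lemma Gset_upd A' B x E : B x.1 x.2 = setT ->
  Gset A' (upd B x E) = Gset A' B `&` X x.1 x.2 @^-1` E.
Proof.
move=> Bx; apply/seteqP; split => w /=.
- move=> [wA /bigI_ord H]; split; [split => //|].
    apply/bigI_ord => j; apply/bigI_ord => r; have /bigI_ord := H j => /(_ r).
    rewrite /upd /=; case: eqP => [jrx _|//]; by move: Bx; rewrite -jrx /= => ->.
  have /bigI_ord := H x.1 => /(_ x.2); by rewrite /upd /= -surjective_pairing eqxx.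
- move=> [[wA /bigI_ord H] wE]; split => //.
  apply/bigI_ord => j; apply/bigI_ord => r; rewrite /upd /=; case: eqP => [jrx|_]; first by move: wE; rewrite -jrx.
  by have /bigI_ord := H j => /(_ r).
Qed.

Lemma P_upd A' B x E : (forall j r, measurable (B j r)) -> measurable E ->
  B x.1 x.2 = setT -> P (Gset A' (upd B x E)) = P (Gset A' B) * Qd x E.
Proof.
move=> mB mE Bx.
have mB' : forall j r, measurable (upd B x E j r).
  by move=> j r; rewrite /upd; case: eqP.
rewrite /Gset !indep // -muleA; congr (_ * _).
rewrite !pair_big /= (bigD1 x) //= (bigD1 x (P:=xpredT)) //=.
rewrite /upd /= -surjective_pairing eqxx Bx preimage_setT probability_setT mul1e.
rewrite muleC; congr (_ * _); apply: eq_bigr => i ix.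
by rewrite -surjective_pairing (negbTE ix).
Qed.

Lemma PU (H : set Omega) (mH : measurable H) (U V : Omega -> R)
  (mU : measurable_fun setT U) (mV : measurable_fun setT V)
  (c : \bar R) (c0 : 0 <= c) (c1 : c <= 1) (p1 p2 : probability R R) :
  (forall E1 E2, measurable E1 -> measurable E2 ->
     P (H `&` U @^-1` E1 `&` V @^-1` E2) = c * p1 E1 * p2 E2) ->
  forall C, measurable C ->
  P (H `&` (fun w => U w + V w)%R @^-1` C) = c * Defs.conv p1 p2 C.
Proof.
move=> hrect C mC.
have mW : measurable_fun setT (fun w => (U w, V w)) by exact: measurable_fun_pair.
have [c00|cn0] := eqVneq c 0.
  rewrite c00 mul0e; apply/eqP; rewrite eq_le measure_ge0 andbT.
  have := hrect setT setT measurableT measurableT.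
  rewrite !preimage_setT !setIT c00 !mul0e => <-.
  apply: measureIl => //.
  by apply: mpreT => //; exact: (measurable_funD mU mV).
have cpos : 0 < c by rewrite lt0e cn0 c0.
have cfin : c \is a fin_num by rewrite ge0_fin_numE // (le_lt_trans c1) // ltey.
have fc0 : (0 < fine c)%R by apply: fine_gt0; rewrite cpos (le_lt_trans c1) // ltey.
rewrite -(fineK cfin).
have := @PU_aux R _ Omega P H mH (fun w => (U w, V w)) mW (fine c) fc0 p1 p2.
move=> /(_ _ (addR @^-1` C) (meas_addpre mC)) <- //.
move=> E1 E2 mE1 mE2; rewrite fineK // -hrect //.
by rewrite /m0W setIA.
Qed.

Fixpoint Gr (L : seq (seq idx * set R)) : set Omega :=
  if L is bc :: L' then (Sb bc.1 @^-1` bc.2) `&` Gr L' else setT.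
Fixpoint prodv (L : seq (seq idx * set R)) : \bar R :=
  if L is bc :: L' then bigconv (map Qd bc.1) bc.2 * prodv L' else 1.
Fixpoint allmeas (L : seq (seq idx * set R)) : Prop :=
  if L is bc :: L' then measurable bc.2 /\ allmeas L' else True.
Definition flatL (L : seq (seq idx * set R)) := flatten (map fst L).

Lemma mGr L : allmeas L -> measurable (Gr L).
Proof.
elim: L => [|[b C] L IH] /=; first by [].
by move=> [mC mL]; apply: measurableI; [apply: mpreT => //; exact: mSb|exact: IH].
Qed.

Lemma good_Qb b : good (bigconv (map Qd b)).
Proof. by apply: good_bigconv => i _; exact: good_prob. Qed.

Lemma prodv_bound L : allmeas L -> 0 <= prodv L /\ prodv L <= 1.
Proof.
elim: L => [|[b C] L IH] /=; first by rewrite lee01.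
move=> [mC /IH [h0 h1]]; have [g0 g1] := good_bound (good_Qb b) mC.
split; first exact: mule_ge0.
by rewrite -(mule1 1); apply: lee_pmul.
Qed.

Lemma IND N : forall L A' B, (size (flatL L) + size L <= N)%N ->
  uniq (flatL L) -> allmeas L -> (forall j r, measurable (B j r)) ->
  (forall i, i \in flatL L -> B i.1 i.2 = setT) ->
  P (Gset A' B `&` Gr L) = P (Gset A' B) * prodv L.
Proof.
elim: N => [|N IH] [|[b C] L] A' B hN uL mL mB hB /=.
- by rewrite setIT mule1.
- by rewrite addnS in hN.
- by rewrite setIT mule1.
case: mL => /= mC mL'.
case: b hN uL hB => [|x b] hN uL hB.
  have -> : Sb [::] = fun _ => 0%R by apply/funext => w; rewrite /Sb big_nil.
  rewrite /= diracE.
  have hN' : (size (flatL L) + size L <= N)%N by move: hN; rewrite /= addnS.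
  case: (pselect (C 0%R)) => C0.
    rewrite (_ : (fun _ => 0%R) @^-1` C = setT); last by apply/seteqP; split.
    rewrite setTI mem_set // mul1e; exact: IH.
  rewrite (_ : (fun _ => 0%R) @^-1` C = set0); last by apply/seteqP; split.
  by rewrite set0I setI0 measure0 memNset // mul0e mule0.
have [p' hp'] := good_Qb b.
rewrite -/(flatL L) in hN uL hB.
have [xNb ubL] : x \notin b ++ flatL L /\ uniq (b ++ flatL L) by move: uL => /= /andP.
have Bx : B x.1 x.2 = setT by apply: hB; rewrite /= inE eqxx.
pose G := Gset A' B.
have mG : measurable G by exact: mGset.
have [c0 c1] := prodv_bound mL'.
have [g0 g1] : 0 <= P G /\ P G <= 1 by split; [exact: measure_ge0|exact: probability_le1].
have mH : measurable (G `&` Gr L) by apply: measurableI => //; exact: mGr.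
have hrect : forall E1 E2, measurable E1 -> measurable E2 ->
    P ((G `&` Gr L) `&` X x.1 x.2 @^-1` E1 `&` Sb b @^-1` E2) =
    (P G * prodv L) * Qd x E1 * p' E2.
  move=> E1 E2 mE1 mE2.
  have mB' : forall j r, measurable (upd B x E1 j r).
    by move=> j r; rewrite /upd; case: eqP.
  rewrite (_ : (G `&` Gr L) `&` X x.1 x.2 @^-1` E1 `&` Sb b @^-1` E2 =
     Gset A' (upd B x E1) `&` (Sb b @^-1` E2 `&` Gr L)); last first.
    by rewrite Gset_upd //; apply/seteqP; split => w /=; tauto.
  have hsz : (size (flatL ((b, E2) :: L)) + size ((b, E2) :: L) <= N)%N.
    by move: hN; rewrite /flatL /= !size_cat addSn ltnS.
  have hB' : forall i, i \in flatL ((b, E2) :: L) -> upd B x E1 i.1 i.2 = setT.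
    move=> i ibL; rewrite /upd /=.
    have -> : ((i.1, i.2) == x) = false.
      by apply/negbTE; rewrite -surjective_pairing; apply: contraNneq xNb => <-.
    by apply: hB; rewrite /= inE; move: ibL; rewrite /flatL /= => ->; rewrite orbT.
  rewrite (IH ((b, E2) :: L) A' (upd B x E1) hsz ubL (conj mE2 mL') mB' hB') /=.
  rewrite P_upd // -hp' //.
  by rewrite -!muleA; congr (_ * _); rewrite [RHS]muleC -muleA.
have cc0 : 0 <= P G * prodv L by exact: mule_ge0.
have cc1 : P G * prodv L <= 1 by rewrite -(mule1 1); apply: lee_pmul.
have key := PU mH (mX x.1 x.2) (mSb b) cc0 cc1 hrect mC.
rewrite (_ : Gset A' B `&` (Sb (x :: b) @^-1` C `&` Gr L) =
   (G `&` Gr L) `&` (fun w => (X x.1 x.2 w + Sb b w)%R) @^-1` C); last first.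
  by apply/seteqP; split => w /=; rewrite /Sb big_cons; tauto.
rewrite key (conv_meq (meq_refl (Qd x)) (meq_sym hp')) //.
by rewrite -muleA; congr (_ * _); rewrite muleC.
Qed.
Lemma Gset_T : Gset [set: {perm 'I_n}]%SET (fun _ _ => setT) = setT.
Proof.
apply/seteqP; split => w // _; split; first exact: (finset.in_setT (pi w)).
by apply/bigI_ord => j; apply/bigI_ord.
Qed.

Lemma LAW b C : uniq b -> measurable C ->
  bigconv (map Qd b) C = P (Sb b @^-1` C).
Proof.
move=> ub mC.
have := @IND (size b + 1) [:: (b, C)] [set: {perm 'I_n}]%SET (fun _ _ => setT).
rewrite /= Gset_T probability_setT mul1e mule1 setTI setIT => <- //.
- by rewrite /flatL /= cats0 addn1.
- by rewrite /flatL /= cats0.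
Qed.

Lemma CB b1 b2 : uniq (b1 ++ b2) ->
  meq (Defs.conv (bigconv (map Qd b1)) (bigconv (map Qd b2))) (bigconv (map Qd (b1 ++ b2))).
Proof.
move=> u12 C mC.
have [p1 hp1] := good_Qb b1; have [p2 hp2] := good_Qb b2.
rewrite (conv_meq hp1 hp2) // LAW //.
have hrect : forall E1 E2, measurable E1 -> measurable E2 ->
    P (setT `&` Sb b1 @^-1` E1 `&` Sb b2 @^-1` E2) = 1 * p1 E1 * p2 E2.
  move=> E1 E2 mE1 mE2; rewrite setTI.
  have := @IND (size (b1 ++ b2) + 2) [:: (b1, E1); (b2, E2)] [set: {perm 'I_n}]%SET (fun _ _ => setT).
  rewrite /= Gset_T probability_setT !mul1e mule1 setIT -hp1 // -hp2 // setTI => -> //.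
  - by rewrite /flatL /= cats0 size_cat.
  - by rewrite /flatL /= cats0.
have := PU measurableT (mSb b1) (mSb b2) lee01 (lexx 1) hrect mC.
rewrite setTI mul1e => <-.
have -> : Sb (b1 ++ b2) = (fun w => Sb b1 w + Sb b2 w)%R.
  by apply/funext => w; rewrite /Sb big_cat.
by [].
Qed.
Lemma mpis (s : seq {perm 'I_n}) : measurable [set w | pi w \in s].
Proof.
elim: s => [|x s IH].
  by rewrite (_ : [set w | _] = set0) //; apply/seteqP; split => w //=; rewrite in_nil.
rewrite (_ : [set w | _] = [set w | pi w = x] `|` [set w | pi w \in s]).
  exact: measurableU.
apply/seteqP; split => w /=; rewrite inE.
  by move=> /orP[/eqP->|ws]; [left|right].
by move=> [->|ws]; rewrite ?eqxx ?ws ?orbT.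
Qed.

Lemma part_seq (s : seq {perm 'I_n}) E : uniq s ->
  (forall x, measurable ([set w | pi w = x] `&` E)) ->
  measurable (E `&` [set w | pi w \in s]) /\
  P (E `&` [set w | pi w \in s]) = \sum_(x <- s) P ([set w | pi w = x] `&` E).
Proof.
move=> + mE; elim: s => [_|x s IH /= /andP[xs us]].
  rewrite big_nil (_ : [set w | _] = set0) ?setI0 ?measure0 //.
  by apply/seteqP; split => w //=; rewrite in_nil.
have [m2 IH'] := IH us.
have ES : E `&` [set w | pi w \in x :: s] = ([set w | pi w = x] `&` E) `|` (E `&` [set w | pi w \in s]).
  apply/seteqP; split => w /=.
    by move=> [Ew]; rewrite inE => /orP[/eqP->|ws]; [left|right].
  by move=> [[-> Ew]|[Ew ws]]; split => //; rewrite inE ?eqxx ?ws ?orbT.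
rewrite ES; split; first exact: measurableU.
rewrite big_cons -IH' measureU //.
apply/seteqP; split => [w [[px _] [_ pxs]]|//]; move: xs; by rewrite -px pxs.
Qed.

Lemma part E : (forall x, measurable ([set w | pi w = x] `&` E)) ->
  P E = \sum_(x : {perm 'I_n}) P ([set w | pi w = x] `&` E).
Proof.
move=> mE; rewrite -(part_seq (index_enum_uniq _) mE).2.
congr (P _); apply/seteqP; split => [w Ew|w [] //]; split => //=; exact: mem_index_enum.
Qed.

Definition bs (s : {perm 'I_n}) : seq idx := [seq (j, s j) | j <- enum 'I_n].

Lemma uniq_bs s : uniq (bs s).
Proof.
rewrite map_inj_uniq ?enum_uniq // => j k [].
done.
Qed.

Lemma Gset1 s : Gset [set s]%SET (fun _ _ => setT) = [set w | pi w = s].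
Proof.
apply/seteqP; split => w /=.
  by move=> [/= /[!finset.in_set1] /eqP].
move=> ps; split; first by rewrite /= finset.in_set1 ps.
by apply/bigI_ord => j; apply/bigI_ord.
Qed.

Lemma piS_eq s (A : set R) :
  [set w | pi w = s] `&` ((fun w => \sum_(j < n) X j (pi w j) w)%R @^-1` A) =
  [set w | pi w = s] `&` (Sb (bs s) @^-1` A).
Proof.
have E : forall w, Sb (bs s) w = (\sum_(j < n) X j (s j) w)%R.
  by move=> w; rewrite /Sb /bs big_map big_enum.
by apply/seteqP; split => w /= [ps]; rewrite E ps.
Qed.

Lemma LHS_eq (A : set R) : measurable A ->
  (forall s : {perm 'I_n}, P [set w | pi w = s] = ((n`!)%:R^-1)%:E) ->
  P ((fun w => \sum_(j < n) X j (pi w j) w)%R @^-1` A) =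
  ((n`!)%:R^-1)%:E * \sum_(s : {perm 'I_n}) bigconv (map Qd (bs s)) A.
Proof.
move=> mA pi_unif.
rewrite part; last first.
  move=> x; rewrite piS_eq; apply: measurableI => //; apply: mpreT => //; exact: mSb.
rewrite ge0_sume_distrr; last by move=> s _; have [] := good_bound (good_Qb (bs s)) mA.
apply: eq_bigr => s _; rewrite piS_eq -Gset1.
have := @IND (size (bs s) + 1) [:: (bs s, A)] [set s]%SET (fun _ _ => setT).
rewrite /= setIT mule1 => -> //.
- by rewrite Gset1 pi_unif.
- by rewrite /flatL /= cats0 addn1.
- by rewrite /flatL /= cats0 uniq_bs.
Qed.
Lemma Q1 i : meq (Qd i) (bigconv (map Qd [:: i])).
Proof.
move=> C mC; rewrite LAW //.
have -> : Sb [:: i] = X i.1 i.2 by apply/funext => w; rewrite /Sb big_seq1.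
by [].
Qed.

Lemma conv2_blk a b : a != b ->
  meq (Defs.conv (Qd a) (Qd b)) (bigconv (map Qd [:: a; b])).
Proof.
move=> ab; apply: meq_trans (conv_meq (Q1 a) (Q1 b)) _.
by apply: (@CB [:: a] [:: b]); rewrite /= inE ab.
Qed.

Lemma conv_comm2 a b : a != b ->
  meq (Defs.conv (Qd a) (Qd b)) (Defs.conv (Qd b) (Qd a)).
Proof.
move=> ab C mC; rewrite conv2_blk // conv2_blk 1?eq_sym // !LAW //;
  try by rewrite /= inE ?ab // eq_sym ab.
have -> : Sb [:: a; b] = Sb [:: b; a].
  by apply/funext => w; rewrite /Sb !big_cons !big_nil addrCA.
by [].
Qed.

Lemma BL (I : eqType) (s : seq I) (blk : I -> seq idx) :
  uniq (flatten (map blk s)) ->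
  meq (bigconv (map (fun i => bigconv (map Qd (blk i))) s))
      (bigconv (map Qd (flatten (map blk s)))).
Proof.
elim: s => [_|i s IH /= u]; first exact: meq_refl.
rewrite map_cat; apply: meq_trans (conv_meq (meq_refl _) (IH _)) _.
  by move: u; rewrite cat_uniq => /and3P[].
rewrite -map_cat; exact: CB.
Qed.

Lemma good_nseq (f : set R -> \bar R) k : good f -> good (bigconv (nseq k f)).
Proof.
move=> gf; elim: k => [|k IH]; first exact: good_dirac.
exact: good_conv.
Qed.

Variables (phi : {perm 'I_n}) (hn0 : (0 < n)%N).

Definition Qf := fun j k => distribution P (X j k).

Definition elt (t : nat) (r : {perm 'I_n}) (i : 'I_(n./2)) : set R -> \bar R :=
  if (i < t)%N then Rmix Qf (phi (pfst i)) (phi (psnd i)) (r (pfst i)) (r (psnd i))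
  else Defs.conv (Qd (phi (pfst i), r (pfst i))) (Qd (phi (psnd i), r (psnd i))).

Definition tl (r : {perm 'I_n}) :=
  oapp (fun l : 'I_n => convpow (Qf (phi l) (r l)) (n - (n./2).*2))
       (@dirac _ R 0%R R) (insub n.-1).

Definition Ht t r := Defs.conv (bigconv [seq elt t r i | i <- enum 'I_(n./2)]) (tl r).

Lemma perm_term_Ht r : perm_term Qf phi r = Ht (n./2) r.
Proof.
rewrite /perm_term /Ht; congr (Defs.conv (bigconv _) _).
by apply: eq_map => i; rewrite /elt ltn_ord.
Qed.

Lemma good_elt t r i : good (elt t r i).
Proof.
rewrite /elt; case: ifP => _; last by apply: good_conv; exact: good_prob.
by rewrite Rmix_mix; apply: good_mix; apply: good_conv; exact: good_prob.
Qed.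

Lemma good_tl r : good (tl r).
Proof.
rewrite /tl; case: insub => [l|] /=; last exact: good_dirac.
by apply: good_nseq; exact: good_prob.
Qed.

Lemma good_Ht t r : good (Ht t r).
Proof. apply: good_conv; last exact: good_tl. by apply: good_bigconv => i _; exact: good_elt. Qed.

Definition sw (t : 'I_(n./2)) : {perm 'I_n} := tperm (pfst t) (psnd t).

Lemma pfst_psnd (i j : 'I_(n./2)) : pfst i != psnd j.
Proof.
apply/eqP => /(congr1 val) /= /(congr1 odd); by rewrite /= !odd_double.
Qed.

Lemma pfst_inj (i j : 'I_(n./2)) : (pfst i == pfst j) = (i == j).
Proof.
apply/eqP/eqP => [/(congr1 val) /= /double_inj /val_inj //|->//].
Qed.

Lemma psnd_inj (i j : 'I_(n./2)) : (psnd i == psnd j) = (i == j).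
Proof.
apply/eqP/eqP => [/(congr1 val) /= [] /double_inj /val_inj //|->//].
Qed.

Lemma sw_fix (t i : 'I_(n./2)) : i != t -> sw t (pfst i) = pfst i /\ sw t (psnd i) = psnd i.
Proof.
move=> it; rewrite /sw; split; apply: tpermD.
- by rewrite pfst_inj eq_sym.
- by rewrite eq_sym pfst_psnd.
- by rewrite pfst_psnd.
- by rewrite psnd_inj eq_sym.
Qed.

Lemma tl_sw (t : 'I_(n./2)) r : tl (sw t * r) = tl r.
Proof.
rewrite /tl; case: insubP => [l _ vl|//] /=.
have := odd_double_half n; case: (odd n) => /= hn'.
- have ht := ltn_ord t.
  have hm : n.-1 = (n./2).*2 by rewrite -{1}hn' add1n.
  have h2 : (t.*2.+1 < (n./2).*2)%N by rewrite -doubleS leq_double.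
  have lt1 : pfst t != l.
    apply/eqP => /(congr1 val); rewrite vl hm /= => h.
    by move: h2; rewrite -h ltnNge leqnSn.
  have lt2 : psnd t != l.
    apply/eqP => /(congr1 val); rewrite vl hm /= => h.
    by move: h2; rewrite h ltnn.
  by rewrite permM /sw tpermD.
- by move: hn'; rewrite add0n => ->; rewrite subnn.
Qed.

Lemma Ht_step t r (ht : (t < n./2)%N) :
  meq (Ht t.+1 r) (mix (Ht t r) (Ht t (sw (Ordinal ht) * r))).
Proof.
set t' := Ordinal ht; rewrite /Ht tl_sw.
have g2 := good_elt t r; have g3 := good_elt t (sw t' * r).
have Ho : forall i, i != t' -> meq (elt t.+1 r i) (elt t r i) /\
                              meq (elt t.+1 r i) (elt t (sw t' * r) i).
  move=> i it.
  have E : (i < t.+1)%N = (i < t)%N.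
    by rewrite ltnS leq_eqVlt (_ : (val i == t) = false) //; apply/negbTE.
  have [f1 f2] := sw_fix it.
  by rewrite /elt E !permM f1 f2; split; exact: meq_refl.
have Ht' : meq (elt t.+1 r t') (mix (elt t r t') (elt t (sw t' * r) t')).
  rewrite /elt /= ltnSn ltnn !permM /sw tpermL tpermR Rmix_mix.
  apply: mix_meq; first exact: meq_refl.
  have ne : (phi (psnd t'), r (pfst t')) != (phi (pfst t'), r (psnd t')).
    apply/eqP => -[] /eqP; by rewrite (inj_eq perm_inj) eq_sym (negbTE (pfst_psnd _ _)).
  exact: (conv_comm2 ne).
apply: meq_trans (conv_meq (bigconv_lin (enum_uniq _) (mem_enum _ t') g2 g3 Ho Ht')
  (meq_refl _)) _.
apply: conv_mixl; last exact: good_tl.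
- by apply: good_bigconv => i _; exact: good_elt.
- by apply: good_bigconv => i _; exact: good_elt.
Qed.

Lemma half_sum (x : \bar R) : (2%:R^-1)%:E * (x + x) = x.
Proof.
case: x => [x| |] /=.
- rewrite -EFinM; congr EFin.
  lra.
- by rewrite addye // muleC gt0_mulye // lte_fin invr_gt0 ltr0n.
- by rewrite addNye muleC gt0_mulNye // lte_fin invr_gt0 ltr0n.
Qed.

Lemma Sum_t (A : set R) (mA : measurable A) t : (t <= n./2)%N ->
  \sum_(r : {perm 'I_n}) Ht t r A = \sum_(r : {perm 'I_n}) Ht 0 r A.
Proof.
elim: t => [//|t IH] ht.
rewrite -IH ?(ltnW ht) //.
set s := sw (Ordinal ht).
transitivity (\sum_(r : {perm 'I_n}) mix (Ht t r) (Ht t (s * r)) A).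
  by apply: eq_bigr => r _; apply: Ht_step.
rewrite /mix -ge0_sume_distrr; last first.
  move=> r _; apply: adde_ge0; [have [] := good_bound (good_Ht t r) mA|
    have [] := good_bound (good_Ht t (s * r)) mA] => //.
rewrite big_split /=.
have -> : \sum_(r : {perm 'I_n}) Ht t (s * r) A = \sum_(r : {perm 'I_n}) Ht t r A.
  by rewrite [RHS](reindex_inj (mulgI s)).
exact: half_sum.
Qed.

Definition blk (r : {perm 'I_n}) (i : 'I_(n./2)) : seq idx :=
  [:: (phi (pfst i), r (pfst i)); (phi (psnd i), r (psnd i))].
Lemma l0_lt : (n.-1 < n)%N. Proof. by rewrite ltn_predL. Qed.
Definition l0 : 'I_n := Ordinal l0_lt.
Definition tbk : seq 'I_n := if odd n then [:: l0] else [::].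
Definition ks := flatten [seq [:: pfst i; psnd i] | i <- enum 'I_(n./2)] ++ tbk.

Lemma flat_iota a k : flatten [seq [:: i.*2; i.*2.+1] | i <- iota a k] = iota a.*2 k.*2.
Proof. by elim: k a => [//|k IH] a /=; rewrite IH doubleS. Qed.

Lemma map_val_flat (s : seq 'I_(n./2)) :
  map val (flatten [seq [:: pfst i; psnd i] | i <- s]) =
  flatten [seq [:: i.*2; i.*2.+1] | i <- map val s].
Proof. by elim: s => //= i s ->. Qed.

Lemma ks_enum : ks = enum 'I_n.
Proof.
apply: (inj_map val_inj); rewrite val_enum_ord map_cat map_val_flat val_enum_ord flat_iota /tbk.
have := odd_double_half n; case: (odd n) => /= hn'.
- have hm : n.-1 = (n./2).*2 by rewrite -{1}hn' add1n.
  rewrite -{3}hn' add1n -addn1 iotaD /= add0n.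
  by rewrite hm.
- by rewrite cats0; move: hn'; rewrite add0n => {2}<-.
Qed.

Lemma map_flat_blk (r : {perm 'I_n}) (s : seq 'I_(n./2)) :
  map (fun k => (phi k, r k)) (flatten [seq [:: pfst i; psnd i] | i <- s]) =
  flatten (map (blk r) s).
Proof. by elim: s => //= i s ->. Qed.

Lemma L1_eq (r : {perm 'I_n}) : flatten (map (blk r) (enum 'I_(n./2))) ++
    (if odd n then [:: (phi l0, r l0)] else [::]) = [seq (phi k, r k) | k <- enum 'I_n].
Proof.
rewrite -ks_enum /ks map_cat map_flat_blk /tbk; by case: (odd n).
Qed.

Lemma tl_eq (r : {perm 'I_n}) : tl r = bigconv (map Qd (if odd n then [:: (phi l0, r l0)] else [::])).
Proof.
rewrite /tl; case: insubP => [l _ vl|]; last by rewrite l0_lt.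
have -> : l = l0 by apply: val_inj.
rewrite /= /convpow.
have -> : (n - (n./2).*2)%N = odd n by rewrite -[X in (X - _)%N](odd_double_half n) addnK.
by case: (odd n).
Qed.

Lemma blk_neq (r : {perm 'I_n}) (i : 'I_(n./2)) : (phi (pfst i), r (pfst i)) != (phi (psnd i), r (psnd i)).
Proof. by apply/eqP => -[] /eqP; rewrite (inj_eq perm_inj) (negbTE (pfst_psnd _ _)). Qed.

Lemma Ht0 (r : {perm 'I_n}) : meq (Ht 0 r) (bigconv (map Qd [seq (phi k, r k) | k <- enum 'I_n])).
Proof.
have u : uniq [seq (phi k, r k) | k <- enum 'I_n].
  by rewrite map_inj_uniq ?enum_uniq // => j k [] /perm_inj.
rewrite -L1_eq in u *.
rewrite /Ht tl_eq.
apply: meq_trans (conv_meq _ (meq_refl _)) (CB u).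
have u1 : uniq (flatten (map (blk r) (enum 'I_(n./2)))).
  by move: u; rewrite cat_uniq => /and3P[].
apply: meq_trans (BL u1).
apply: bigconv_map_meq => i _; rewrite /elt ltn0.
exact: conv2_blk (blk_neq r i).
Qed.

Lemma RHS_eq (A : set R) : measurable A ->
  \sum_(r : {perm 'I_n}) perm_term Qf phi r A =
  \sum_(s : {perm 'I_n}) bigconv (map Qd (bs s)) A.
Proof.
move=> mA.
under eq_bigr do rewrite perm_term_Ht.
rewrite Sum_t //.
rewrite [RHS](reindex_inj (mulgI phi^-1%g)) /=.
apply: eq_bigr => r _; rewrite Ht0 // !LAW //; last 2 first.
- exact: uniq_bs.
- by rewrite map_inj_uniq ?enum_uniq // => j k [] /perm_inj.
have -> : Sb [seq (phi k, r k) | k <- enum 'I_n] = Sb (bs (phi^-1 * r)%g) => //.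
apply/funext => w; rewrite /Sb /bs big_map big_enum big_map big_enum /=.
rewrite [RHS](reindex_inj (@perm_inj _ phi)) /=.
by apply: eq_bigr => k _; rewrite permM permK.
Qed.

End Prob.

Unset Implicit Arguments.
Theorem mainTheorem6 (R : realType) (n : nat) (hn : (2 <= n)%N)
  (d : measure_display) (Omega : measurableType d) (P : probability Omega R)
  (X : 'I_n -> 'I_n -> {RV P >-> R}) (pi : Omega -> {perm 'I_n})
  (pi_meas : forall s : {perm 'I_n}, measurable [set w | pi w = s])
  (pi_unif : forall s : {perm 'I_n},
      P [set w | pi w = s] = ((n`!)%:R^-1)%:E)
  (indep : forall (A : {set {perm 'I_n}}) (B : 'I_n -> 'I_n -> set R),
      (forall j r, measurable (B j r)) ->
      P ([set w | pi w \in A] `&`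
         \big[setI/setT]_(j < n) \big[setI/setT]_(r < n) (X j r @^-1` B j r))
      = (P [set w | pi w \in A] *
         \prod_(j < n) \prod_(r < n) P (X j r @^-1` B j r))%E)
  (phi : {perm 'I_n}) (A : set R) (mA : measurable A) :
  P ((fun w => \sum_(j < n) X j (pi w j) w) @^-1` A)
  = (((n`!)%:R^-1)%:E *
     \sum_(r : {perm 'I_n})
        perm_term (fun j k => distribution P (X j k)) phi r A)%E.
Proof.
have hn0 : (0 < n)%N by apply: leq_trans hn.
rewrite (LHS_eq pi_meas indep mA pi_unif).
congr (_ * _)%E.
by rewrite (RHS_eq pi_meas indep phi hn0 mA).
Qed.
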